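(* Let $G=\langle X\rangle$ be a $\delta$-hyperbolic group, $\delta$ a positive integer, and let $V$ be a cyclically minimal word over $X\cup X^{-1}$ with $\|V\|\ge\alpha$, where $\alpha=180\delta$. Then for each $k\in\mathbb Z$, $V^k$ is a $(4,2520\delta)$-quasi-geodesic word in $\Gamma(G,X)$.
   Context: $X$ is finite; $G$ is $\delta$-hyperbolic if every geodesic triangle in the Cayley graph $\Gamma(G,X)$ is $\delta$-slim (each side lies in the $\delta$-neighborhood of the union of the other two). $\|W\|$ denotes the length of a word $W$. A word $V$ is cyclically minimal if $\|V\|$ is minimal among the lengths of all words representing elements conjugate in $G$ to the element represented by $V$. A word $W$ is $(\lambda,c)$-quasi-geodesic if every path $p$ in $\Gamma(G,X)$ labeled by $W$, parametrized by length, satisfies $|s-t|\le\lambda\, d(p(s),p(t))+c$ for all $s,t$. *)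

(* Defs.v *)
From Stdlib Require Import Reals Lra Lia ZArith Arith List ClassicalEpsilon.
Import ListNotations.
Open Scope R_scope.

Record group := Group {
  gcar :> Type;
  gmul : gcar -> gcar -> gcar;
  ginv : gcar -> gcar;
  gone : gcar;
  gassoc : forall x y z, gmul x (gmul y z) = gmul (gmul x y) z;
  gone_l : forall x, gmul gone x = x;
  ginv_l : forall x, gmul (ginv x) x = gone
}.

Section Cayley.
Variable Gr : group.
(** The finite generating set X, given as a duplicate-free list. *)
Variable X : list Gr.

Local Notation "x * y" := (gmul Gr x y).

(** Letters of the alphabet X ∪ X^{-1}: (i, true) is x_i, (i, false) is x_i^{-1}. *)
Definition letter := (nat * bool)%type.
Definition valid_letter (a : letter) : Prop := (fst a < length X)%nat.
Definition lval (a : letter) : Gr :=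
  if snd a then nth (fst a) X (gone Gr) else ginv Gr (nth (fst a) X (gone Gr)).
Definition lflip (a : letter) : letter := (fst a, negb (snd a)).

Definition is_word (w : list letter) : Prop := Forall valid_letter w.
Definition eval (w : list letter) : Gr := fold_right (fun a acc => lval a * acc) (gone Gr) w.
Definition wlength (w : list letter) : nat := length w.

Definition generates : Prop := forall g : Gr, exists w, is_word w /\ eval w = g.

Definition has_word_of_length (g : Gr) (n : nat) : Prop :=
  exists w, is_word w /\ length w = n /\ eval w = g.
Definition glen (g : Gr) : nat :=
  epsilon (inhabits 0%nat)
    (fun n => has_word_of_length g n /\ forall m, has_word_of_length g m -> (n <= m)%nat).
Definition vdist (g h : Gr) : R := INR (glen (ginv Gr g * h)).

(** Points of the geometric realization of Γ(G,X): vertices, and points on the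
    edge from g to g*lval a at distance t ∈ [0,1] from g.  The edge (g,a) is the
    same edge as (g*lval a, lflip a) traversed backwards. *)
Inductive point := PV (g : Gr) | PE (g : Gr) (a : letter) (t : R).

Definition valid_point (p : point) : Prop :=
  match p with PV _ => True | PE _ a t => valid_letter a /\ 0 <= t <= 1 end.

Definition pends (p : point) : list (Gr * R) :=
  match p with PV g => [(g, 0)] | PE g a t => [(g, t); (g * lval a, 1 - t)] end.

Definition end_cands (p q : point) : list R :=
  flat_map (fun e1 => map (fun e2 => snd e1 + vdist (fst e1) (fst e2) + snd e2) (pends q))
           (pends p).

Definition edge_cands (p q : point) : list R :=
  match p, q with
  | PE g a t, PE h b u =>
      (if excluded_middle_informative (h = g /\ b = a) then [Rabs (t - u)] else [])
      ++ (if excluded_middle_informative (h = g * lval a /\ b = lflip a)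
          then [Rabs (1 - t - u)] else [])
  | _, _ => []
  end.

(** The path metric of Γ(G,X) (edges of length 1). *)
Definition dist (p q : point) : R :=
  match end_cands p q ++ edge_cands p q with
  | [] => 0
  | x :: l => fold_right Rmin x l
  end.

Definition is_geodesic (gamma : R -> point) (L : R) (P Q : point) : Prop :=
  0 <= L /\
  (forall s, 0 <= s <= L -> valid_point (gamma s)) /\
  dist (gamma 0) P = 0 /\ dist (gamma L) Q = 0 /\
  (forall s t, 0 <= s <= L -> 0 <= t <= L -> dist (gamma s) (gamma t) = Rabs (s - t)).

Definition side_near (d : R) (gamma : R -> point) (L : R)
    (gamma' : R -> point) (L' : R) (gamma'' : R -> point) (L'' : R) : Prop :=
  forall s, 0 <= s <= L ->
    (exists t, 0 <= t <= L' /\ dist (gamma s) (gamma' t) <= d) \/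
    (exists t, 0 <= t <= L'' /\ dist (gamma s) (gamma'' t) <= d).

Definition hyperbolic (d : R) : Prop :=
  forall (A B C : point) (g1 g2 g3 : R -> point) (L1 L2 L3 : R),
    valid_point A -> valid_point B -> valid_point C ->
    is_geodesic g1 L1 A B -> is_geodesic g2 L2 B C -> is_geodesic g3 L3 C A ->
    side_near d g1 L1 g2 L2 g3 L3 /\
    side_near d g2 L2 g3 L3 g1 L1 /\
    side_near d g3 L3 g1 L1 g2 L2.

Definition cyclically_minimal (V : list letter) : Prop :=
  forall (g : Gr) (W : list letter), is_word W ->
    eval W = g * (eval V * ginv Gr g) -> (length V <= length W)%nat.

Definition pvert (g : Gr) (W : list letter) (i : nat) : Gr := g * eval (firstn i W).
Definition path_pt (g : Gr) (W : list letter) (s : R) : point :=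
  let i := Z.to_nat (Int_part s) in
  match nth_error W i with
  | Some a => PE (pvert g W i) a (s - INR i)
  | None => PV (pvert g W (length W))
  end.

Definition quasi_geodesic (lam c : R) (W : list letter) : Prop :=
  forall (g : Gr) (s t : R),
    0 <= s <= INR (length W) -> 0 <= t <= INR (length W) ->
    Rabs (s - t) <= lam * dist (path_pt g W s) (path_pt g W t) + c.

End Cayley.

Definition winv (w : list letter) : list letter := rev (map lflip w).
Definition wpown (w : list letter) (n : nat) : list letter := concat (repeat w n).
Definition wpowZ (w : list letter) (k : Z) : list letter :=
  if Z.leb 0 k then wpown w (Z.to_nat k) else wpown (winv w) (Z.to_nat (- k)).

(* Submission.v *)
Require Import Defs.
From Stdlib Require Import Reals ZArith List.
Open Scope R_scope.
From Stdlib Require Import Lra Lia ClassicalEpsilon.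
Import ListNotations.
Local Open Scope nat_scope.

Section G.
Variable Gr : group.
Variable X : list Gr.
Local Notation "x ** y" := (gmul Gr x y) (at level 40, left associativity).
Local Notation one := (gone Gr).
Local Notation inv := (ginv Gr).
Local Notation ev := (eval Gr X).

Lemma mul1l x : one ** x = x. Proof. apply gone_l. Qed.
Lemma mulVl x : inv x ** x = one. Proof. apply ginv_l. Qed.
Lemma mulA x y z : x ** (y ** z) = (x ** y) ** z. Proof. apply gassoc. Qed.
Lemma mul_cancel_l x y z : x ** y = x ** z -> y = z.
Proof. intro H. rewrite <- (mul1l y), <- (mul1l z), <- (mulVl x), <- !mulA, H. reflexivity. Qed.
Lemma mulVr x : x ** inv x = one.
Proof.
  rewrite <- (mul1l (x ** inv x)). rewrite <- (mulVl (inv x)).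
  rewrite <- mulA. rewrite (mulA (inv x) x (inv x)), mulVl, mul1l. reflexivity.
Qed.
Lemma mul1r x : x ** one = x.
Proof. rewrite <- (mulVl x), mulA, mulVr, mul1l. reflexivity. Qed.
Lemma inv_mul x y : inv (x ** y) = inv y ** inv x.
Proof. apply (mul_cancel_l (x ** y)). rewrite mulVr, mulA, <- (mulA x y), mulVr, mul1r, mulVr. reflexivity. Qed.
Lemma inv_inv x : inv (inv x) = x.
Proof. apply (mul_cancel_l (inv x)). rewrite mulVr, mulVl. reflexivity. Qed.
Lemma inv1 : inv one = one.
Proof. rewrite <- (mul1l (inv one)). apply mulVr. Qed.

Lemma ev_app u v : ev (u ++ v) = ev u ** ev v.
Proof. induction u as [|a u IH]; simpl. now rewrite mul1l. rewrite IH. apply mulA. Qed.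
Lemma lval_flip a : lval Gr X (lflip a) = inv (lval Gr X a).
Proof. unfold lval, lflip; destruct a as [i []]; simpl; auto. now rewrite inv_inv. Qed.
Lemma ev_winv w : ev (winv w) = inv (ev w).
Proof. induction w as [|a w IH]; simpl. now rewrite inv1. unfold winv in *. simpl.
  rewrite ev_app, IH, inv_mul. simpl. rewrite mul1r, lval_flip. reflexivity. Qed.
Lemma word_app u v : is_word Gr X u -> is_word Gr X v -> is_word Gr X (u ++ v).
Proof. unfold is_word; intros; apply Forall_app; auto. Qed.
Lemma word_winv w : is_word Gr X w -> is_word Gr X (winv w).
Proof. unfold is_word, winv; intros H. apply Forall_rev. apply Forall_map.
  eapply Forall_impl; [|exact H]. intros a; unfold valid_letter, lflip; simpl; auto. Qed.
Lemma length_winv w : length (winv w) = length w.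
Proof. unfold winv. now rewrite length_rev, length_map. Qed.
Lemma word_firstn n w : is_word Gr X w -> is_word Gr X (firstn n w).
Proof. unfold is_word; intros H. rewrite <- (firstn_skipn n w) in H. apply Forall_app in H; tauto. Qed.
Lemma word_skipn n w : is_word Gr X w -> is_word Gr X (skipn n w).
Proof. unfold is_word; intros H. rewrite <- (firstn_skipn n w) in H. apply Forall_app in H; tauto. Qed.

Hypothesis gen : generates Gr X.

Lemma min_exists (P : nat -> Prop) n : P n -> exists k, P k /\ forall m, P m -> k <= m.
Proof.
  revert P. induction n as [n IH] using (well_founded_induction lt_wf). intros P Pn.
  destruct (classic (exists m, m < n /\ P m)) as [[m [Hm Pm]]|Hno].
  - exact (IH m Hm P Pm).
  - exists n. split; auto. intros m Pm. destruct (Nat.lt_ge_cases m n); auto.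
    exfalso; apply Hno; eauto.
Qed.

Lemma glen_spec g : has_word_of_length Gr X g (glen Gr X g) /\
  forall m, has_word_of_length Gr X g m -> glen Gr X g <= m.
Proof.
  unfold glen. apply epsilon_spec. destruct (gen g) as [w [Hw He]].
  apply (min_exists _ (length w)). exists w; auto.
Qed.
Lemma glen_le g w : is_word Gr X w -> ev w = g -> glen Gr X g <= length w.
Proof. intros. apply glen_spec. exists w; auto. Qed.
Lemma glen_word g : exists w, is_word Gr X w /\ length w = glen Gr X g /\ ev w = g.
Proof. apply glen_spec. Qed.

Definition d (u v : Gr) : nat := glen Gr X (inv u ** v).

Lemma d_refl u : d u u = 0.
Proof. unfold d. rewrite mulVl. assert (H := glen_le one [] (Forall_nil _) eq_refl). simpl in H. lia. Qed.
Lemma d_sym u v : d u v = d v u.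
Proof.
  assert (forall u v, d u v <= d v u).
  { intros a b. unfold d. destruct (glen_word (inv b ** a)) as [w [Hw [Hl He]]].
    rewrite <- Hl, <- length_winv. apply glen_le. now apply word_winv.
    rewrite ev_winv, He, inv_mul, inv_inv. reflexivity. }
  apply Nat.le_antisymm; auto.
Qed.
Lemma d_tri u v w : d u w <= d u v + d v w.
Proof.
  unfold d. destruct (glen_word (inv u ** v)) as [w1 [H1 [L1 E1]]].
  destruct (glen_word (inv v ** w)) as [w2 [H2 [L2 E2]]].
  rewrite <- L1, <- L2, <- length_app. apply glen_le. now apply word_app.
  rewrite ev_app, E1, E2, <- mulA, (mulA v), mulVr, mul1l. reflexivity.
Qed.
Lemma d_word u w : is_word Gr X w -> d u (u ** ev w) <= length w.
Proof. intros. unfold d. apply glen_le; auto. now rewrite mulA, mulVl, mul1l. Qed.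
Lemma d_trans_l g u v : d (g ** u) (g ** v) = d u v.
Proof. unfold d. now rewrite inv_mul, <- mulA, (mulA (inv g)), mulVl, mul1l. Qed.


Local Notation pv := (pvert Gr X).

Lemma firstn_le_split (W : list letter) i j : i <= j ->
  firstn j W = firstn i W ++ firstn (j - i) (skipn i W).
Proof.
  intros H. rewrite <- (firstn_skipn i W) at 1. rewrite firstn_app, firstn_firstn.
  rewrite Nat.min_r by auto.
  destruct (Nat.le_ge_cases i (length W)).
  - rewrite length_firstn, Nat.min_l by auto. reflexivity.
  - rewrite skipn_all2 by auto. rewrite !firstn_nil. reflexivity.
Qed.

Lemma pv_split g W i j : i <= j -> pv g W j = pv g W i ** ev (firstn (j - i) (skipn i W)).
Proof. intros H. unfold pvert. rewrite (firstn_le_split W i j H), ev_app. apply mulA. Qed.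

Lemma pv_le g W i j : is_word Gr X W -> i <= j -> d (pv g W i) (pv g W j) <= j - i.
Proof.
  intros HW H. rewrite (pv_split g W i j H).
  eapply Nat.le_trans. apply d_word. apply word_firstn, word_skipn, HW.
  rewrite length_firstn. lia.
Qed.

Lemma pv_succ g W i a : nth_error W i = Some a -> pv g W (S i) = pv g W i ** lval Gr X a.
Proof.
  intros H. rewrite (pv_split g W i (S i)) by lia.
  replace (S i - i) with 1 by lia.
  assert (E : firstn 1 (skipn i W) = [a]).
  { clear g. revert i H. induction W as [|b W IH]; intros [|i] H; simpl in *; try discriminate.
    - now inversion H.
    - apply IH, H. }
  rewrite E. simpl. now rewrite mul1r.
Qed.

Lemma pv_0 g W : pv g W 0 = g.
Proof. unfold pvert. simpl. apply mul1r. Qed.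
Lemma pv_n g W : pv g W (length W) = g ** ev W.
Proof. unfold pvert. now rewrite firstn_all. Qed.

Definition geo (u v : Gr) (W : list letter) : Prop :=
  is_word Gr X W /\ ev W = inv u ** v /\ length W = d u v.

Lemma geo_exists u v : exists W, geo u v W.
Proof. destruct (glen_word (inv u ** v)) as [W [H1 [H2 H3]]]. exists W. split; auto. Qed.

Lemma geo_vert u v W i j : geo u v W -> i <= j -> j <= length W ->
  d (pv u W i) (pv u W j) = j - i.
Proof.
  intros [HW [HE HL]] Hij Hj.
  assert (A := pv_le u W i j HW Hij).
  assert (B := pv_le u W 0 i HW ltac:(lia)).
  assert (C := pv_le u W j (length W) HW Hj).
  rewrite pv_0 in B. rewrite pv_n, HE, mulA, mulVr, mul1l in C.
  assert (T1 := d_tri u (pv u W i) v). assert (T2 := d_tri (pv u W i) (pv u W j) v).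
  lia.
Qed.

Lemma geo_vert_sym u v W i j : geo u v W -> i <= length W -> j <= length W ->
  d (pv u W i) (pv u W j) = if Nat.leb i j then j - i else i - j.
Proof.
  intros G Hi Hj. destruct (Nat.leb_spec i j).
  - apply (geo_vert u v W); auto.
  - rewrite d_sym. apply (geo_vert u v W); auto; lia.
Qed.

Lemma geo_inj u v W i j : geo u v W -> i <= length W -> j <= length W ->
  pv u W i = pv u W j -> i = j.
Proof.
  intros G Hi Hj E. assert (H := geo_vert_sym u v W i j G Hi Hj). rewrite E, d_refl in H.
  destruct (Nat.leb_spec i j); lia.
Qed.

Definition onGeo (q u v : Gr) : Prop := d u q + d q v = d u v.

Lemma geo_onGeo u v W i : geo u v W -> i <= length W -> onGeo (pv u W i) u v.
Proof.
  intros G Hi. unfold onGeo.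
  assert (A := geo_vert u v W 0 i G ltac:(lia) Hi).
  assert (B := geo_vert u v W i (length W) G Hi ltac:(lia)).
  rewrite pv_0 in A. rewrite pv_n in B. destruct G as [HW [HE HL]].
  rewrite HE, mulA, mulVr, mul1l in B. lia.
Qed.

Definition fi (s : R) : nat := Z.to_nat (Int_part s).

Lemma fi_spec s : (0 <= s)%R -> (INR (fi s) <= s < INR (fi s) + 1)%R.
Proof.
  intros Hs. destruct (base_Int_part s) as [H1 H2].
  assert (Hz : (0 <= Int_part s)%Z).
  { destruct (Z_lt_le_dec (Int_part s) 0) as [Hl|Hl]; auto.
    assert (IZR (Int_part s) <= -1)%R by (apply IZR_le; lia). lra. }
  unfold fi. rewrite INR_IZR_INZ, Z2Nat.id by auto. lra.
Qed.

Lemma fi_INR n : fi (INR n) = n.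
Proof.
  destruct (fi_spec (INR n) (pos_INR n)) as [H1 H2].
  apply INR_le in H1. rewrite <- S_INR in H2. apply INR_lt in H2. lia.
Qed.

Lemma pt_cases g W s : (0 <= s <= INR (length W))%R ->
  (fi s < length W /\ exists a, nth_error W (fi s) = Some a /\
     path_pt Gr X g W s = PE Gr (pv g W (fi s)) a (s - INR (fi s))%R)
  \/ (fi s = length W /\ s = INR (length W) /\ path_pt Gr X g W s = PV Gr (pv g W (length W))).
Proof.
  intros Hs. destruct (fi_spec s ltac:(lra)) as [H1 H2].
  unfold path_pt. fold (fi s). destruct (nth_error W (fi s)) eqn:E.
  - left. split. apply nth_error_Some. congruence. eauto.
  - right. apply nth_error_None in E.
    assert (fi s <= length W) by (apply INR_le; lra).
    assert (fi s = length W) by lia. split; auto. split; auto.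
    rewrite H0 in H1. lra.
Qed.

Lemma pends_char g W s e : is_word Gr X W -> (0 <= s <= INR (length W))%R ->
  In e (pends Gr X (path_pt Gr X g W s)) ->
  exists k, (k = fi s \/ k = S (fi s)) /\ k <= length W /\ fst e = pv g W k /\
     snd e = Rabs (s - INR k) /\ (0 <= snd e)%R.
Proof.
  intros HW Hs Hin. destruct (fi_spec s ltac:(lra)) as [H1 H2].
  destruct (pt_cases g W s Hs) as [[Hl [a [Ea Ep]]]|[Hl [Es Ep]]]; rewrite Ep in Hin; simpl in Hin.
  - destruct Hin as [Hin|[Hin|[]]]; subst e; simpl.
    + exists (fi s). repeat split; auto; try lia. rewrite Rabs_right; lra. lra.
    + exists (S (fi s)). rewrite (pv_succ g W _ a Ea). repeat split; auto; try lia.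
      rewrite S_INR. rewrite Rabs_left1; lra. lra.
  - destruct Hin as [Hin|[]]; subst e; simpl. exists (fi s). repeat split; auto; try lia.
    rewrite Hl, <- Es. rewrite Rminus_diag, Rabs_R0. reflexivity. lra.
Qed.

Lemma pends_has0 g W s : (0 <= s <= INR (length W))%R ->
  In (pv g W (fi s), s - INR (fi s))%R (pends Gr X (path_pt Gr X g W s)).
Proof.
  intros Hs. destruct (pt_cases g W s Hs) as [[Hl [a [Ea Ep]]]|[Hl [Es Ep]]]; rewrite Ep; simpl.
  - auto.
  - left. rewrite Hl, <- Es, Rminus_diag. reflexivity.
Qed.

Lemma pends_has1 g W s : (0 <= s <= INR (length W))%R -> fi s < length W ->
  In (pv g W (S (fi s)), INR (S (fi s)) - s)%R (pends Gr X (path_pt Gr X g W s)).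
Proof.
  intros Hs Hlt. destruct (pt_cases g W s Hs) as [[Hl [a [Ea Ep]]]|[Hl [Es Ep]]]; rewrite Ep; unfold pends.
  - right; left. rewrite (pv_succ g W _ a Ea), S_INR. f_equal. ring.
  - lia.
Qed.

Lemma fold_min_in x l : In (fold_right Rmin x l) (x :: l).
Proof.
  induction l as [|y l IH]; simpl. auto.
  assert (E : Rmin y (fold_right Rmin x l) = y \/ Rmin y (fold_right Rmin x l) = fold_right Rmin x l) by (destruct (Rle_dec y (fold_right Rmin x l)); [left; apply Rmin_left; lra | right; apply Rmin_right; lra]).
  destruct E as [E|E]; rewrite E; simpl in *; intuition auto.
Qed.
Lemma fold_min_le x l c : In c (x :: l) -> (fold_right Rmin x l <= c)%R.
Proof.
  induction l as [|y l IH]; simpl; intros H.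
  - destruct H as [H|[]]; subst; lra.
  - destruct H as [H|[H|H]].
    + subst. eapply Rle_trans. apply Rmin_r. apply IH. now left.
    + subst. apply Rmin_l.
    + eapply Rle_trans. apply Rmin_r. apply IH. now right.
Qed.

Lemma end_cands_ne p q : end_cands Gr X p q <> [].
Proof. destruct p, q; simpl; discriminate. Qed.

Lemma dist_in p q : In (Defs.dist Gr X p q) (end_cands Gr X p q ++ edge_cands Gr X p q).
Proof.
  unfold Defs.dist. destruct (end_cands Gr X p q ++ edge_cands Gr X p q) eqn:E.
  - apply app_eq_nil in E. destruct E as [E _]. now apply end_cands_ne in E.
  - apply fold_min_in.
Qed.
Lemma dist_le p q c : In c (end_cands Gr X p q ++ edge_cands Gr X p q) -> (Defs.dist Gr X p q <= c)%R.
Proof.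
  unfold Defs.dist. destruct (end_cands Gr X p q ++ edge_cands Gr X p q) eqn:E.
  - intros [].
  - apply fold_min_le.
Qed.

Lemma in_end_cands p q c : In c (end_cands Gr X p q) <->
  exists e1 e2, In e1 (pends Gr X p) /\ In e2 (pends Gr X q) /\
     c = (snd e1 + INR (d (fst e1) (fst e2)) + snd e2)%R.
Proof.
  unfold end_cands. rewrite in_flat_map. split.
  - intros [e1 [H1 H2]]. apply in_map_iff in H2. destruct H2 as [e2 [H2 H3]]. exists e1, e2. auto.
  - intros [e1 [e2 [H1 [H2 H3]]]]. exists e1. split; auto. apply in_map_iff. exists e2. auto.
Qed.

Lemma in_edge_cands p q c : In c (edge_cands Gr X p q) ->
  exists g a t h b u, p = PE Gr g a t /\ q = PE Gr h b u /\
   ((h = g /\ b = a /\ c = Rabs (t - u)%R) \/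
    (h = g ** lval Gr X a /\ b = lflip a /\ c = Rabs (1 - t - u)%R)).
Proof.
  destruct p as [g|g a t]; destruct q as [h|h b u]; simpl; try tauto.
  intros Hin. exists g, a, t, h, b, u. split; auto. split; auto.
  apply in_app_or in Hin. destruct Hin as [Hin|Hin].
  - destruct (excluded_middle_informative _) as [[E1 E2]|E]; simpl in Hin; [|tauto].
    destruct Hin as [Hin|[]]. left. auto.
  - destruct (excluded_middle_informative _) as [[E1 E2]|E]; simpl in Hin; [|tauto].
    destruct Hin as [Hin|[]]. right. auto.
Qed.

Lemma nth_word W i a : is_word Gr X W -> nth_error W i = Some a -> valid_letter Gr X a.
Proof.
  intros HW E. apply nth_error_In in E. unfold is_word in HW. rewrite Forall_forall in HW. auto.
Qed.

Lemma lval_valid_d g a : valid_letter Gr X a -> d g (g ** lval Gr X a) <= 1.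
Proof.
  intros Ha. assert (H := d_word g [a] ltac:(constructor; [auto|constructor])).
  simpl in H. rewrite mul1r in H. exact H.
Qed.

Lemma near_vertices g W h W2 s t : is_word Gr X W -> is_word Gr X W2 ->
  (0 <= s <= INR (length W))%R -> (0 <= t <= INR (length W2))%R ->
  exists k l, (k = fi s \/ k = S (fi s)) /\ k <= length W /\
    (l = fi t \/ l = S (fi t)) /\ l <= length W2 /\
    (INR (d (pv g W k) (pv h W2 l)) + Rabs (s - INR k) <=
       Defs.dist Gr X (path_pt Gr X g W s) (path_pt Gr X h W2 t) + (s - INR (fi s)))%R.
Proof.
  intros HW HW2 Hs Ht.
  destruct (fi_spec s ltac:(lra)) as [Hs1 Hs2]. destruct (fi_spec t ltac:(lra)) as [Ht1 Ht2].
  assert (Hin := dist_in (path_pt Gr X g W s) (path_pt Gr X h W2 t)).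
  set (c := Defs.dist Gr X _ _) in *. clearbody c.
  apply in_app_or in Hin. destruct Hin as [Hin|Hin].
  - apply in_end_cands in Hin. destruct Hin as [e1 [e2 [H1 [H2 Hc]]]].
    destruct (pends_char g W s e1 HW Hs H1) as [k [Hk1 [Hk2 [Hk3 [Hk4 Hk5]]]]].
    destruct (pends_char h W2 t e2 HW2 Ht H2) as [l [Hl1 [Hl2 [Hl3 [Hl4 Hl5]]]]].
    exists k, l. repeat split; auto. rewrite <- Hk3, <- Hl3, <- Hk4. lra.
  - apply in_edge_cands in Hin.
    destruct Hin as [g1 [a [t1 [h1 [b [u1 [Ep [Eq Hc]]]]]]]].
    destruct (pt_cases g W s Hs) as [[Hl [a' [Ea Ep']]]|[Hl [Es Ep']]]; rewrite Ep' in Ep; try discriminate.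
    destruct (pt_cases h W2 t Ht) as [[Hl' [b' [Eb Eq']]]|[Hl' [Et Eq']]]; rewrite Eq' in Eq; try discriminate.
    injection Ep as <- <- <-. injection Eq as <- <- <-.
    destruct Hc as [[E1 [E2 E3]]|[E1 [E2 E3]]].
    + exists (fi s), (fi t). repeat split; auto; try lia.
      rewrite E1, d_refl. simpl. rewrite Rabs_right by lra. subst c.
      assert (0 <= Rabs (s - INR (fi s) - (t - INR (fi t))))%R by apply Rabs_pos. lra.
    + exists (fi s), (S (fi t)). repeat split; auto; try lia.
      rewrite (pv_succ h W2 _ b' Eb), E1, E2, lval_flip, <- mulA, mulVr, mul1r, d_refl. simpl.
      rewrite Rabs_right by lra. subst c.
      assert (0 <= Rabs (1 - (s - INR (fi s)) - (t - INR (fi t))))%R by apply Rabs_pos. lra.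
Qed.

Lemma Rabs3 a b c e : (Rabs (a - e) <= Rabs (a - b) + Rabs (b - c) + Rabs (c - e))%R.
Proof. unfold Rabs. repeat destruct (Rcase_abs _); lra. Qed.

Lemma geo_dist_R u v W k l : geo u v W -> k <= length W -> l <= length W ->
  INR (d (pv u W k) (pv u W l)) = Rabs (INR k - INR l).
Proof.
  intros G Hk Hl. rewrite (geo_vert_sym u v W k l G Hk Hl).
  destruct (Nat.leb_spec k l).
  - rewrite minus_INR by auto. rewrite Rabs_left1. ring. apply Rle_minus, le_INR; auto.
  - rewrite minus_INR by lia. rewrite Rabs_right. ring. apply Rge_minus, Rle_ge, le_INR; lia.
Qed.

Lemma geo_path_dist u v W s t : geo u v W ->
  (0 <= s <= INR (length W))%R -> (0 <= t <= INR (length W))%R ->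
  Defs.dist Gr X (path_pt Gr X u W s) (path_pt Gr X u W t) = Rabs (s - t).
Proof.
  intros G Hs Ht. assert (HW : is_word Gr X W) by apply G.
  destruct (fi_spec s ltac:(lra)) as [Hs1 Hs2]. destruct (fi_spec t ltac:(lra)) as [Ht1 Ht2].
  apply Rle_antisym.
  -
    destruct (lt_eq_lt_dec (fi s) (fi t)) as [[Hlt|Heq]|Hgt].
    + assert (Hn : fi s < length W) by (assert (fi t <= length W) by (apply INR_le; lra); lia).
      apply dist_le. apply in_or_app. left. apply in_end_cands.
      exists (pv u W (S (fi s)), INR (S (fi s)) - s)%R, (pv u W (fi t), t - INR (fi t))%R.
      split. apply pends_has1; auto. split. apply pends_has0; auto. cbn [fst snd].
      rewrite (geo_dist_R u v W) by (auto; apply INR_le; lra).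
      assert (INR (S (fi s)) <= INR (fi t))%R by (apply le_INR; lia).
      assert (HS := S_INR (fi s)). rewrite (Rabs_left1 (s - t)) by lra.
      rewrite (Rabs_left1 (INR (S (fi s)) - INR (fi t))) by lra. lra.
    + destruct (pt_cases u W s Hs) as [[Hl [a [Ea Ep]]]|[Hl [Es Ep]]].
      * destruct (pt_cases u W t Ht) as [[Hl' [b [Eb Eq]]]|[Hl' [Et Eq]]]; [|lia].
        rewrite <- Heq in Eb. rewrite Ea in Eb. injection Eb as <-.
        apply dist_le. apply in_or_app. right. rewrite Ep, Eq. simpl.
        apply in_or_app. left. destruct (excluded_middle_informative _) as [_|E].
        -- left. rewrite Heq. f_equal. ring.
        -- exfalso. apply E. rewrite Heq. auto.
      * assert (t = INR (length W)).
        { rewrite <- Heq, Hl in Ht1. lra. }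
        subst s t. rewrite Rminus_diag, Rabs_R0. apply dist_le. apply in_or_app. left.
        apply in_end_cands. exists (pv u W (fi (INR (length W))), INR (length W) - INR (fi (INR (length W))))%R.
        exists (pv u W (fi (INR (length W))), INR (length W) - INR (fi (INR (length W))))%R.
        split. apply pends_has0; auto. split. apply pends_has0; auto. simpl.
        rewrite d_refl, fi_INR. simpl. lra.
    + assert (Hn : fi t < length W) by (assert (fi s <= length W) by (apply INR_le; lra); lia).
      apply dist_le. apply in_or_app. left. apply in_end_cands.
      exists (pv u W (fi s), s - INR (fi s))%R, (pv u W (S (fi t)), INR (S (fi t)) - t)%R.
      split. apply pends_has0; auto. split. apply pends_has1; auto. cbn [fst snd].
      rewrite (geo_dist_R u v W) by (auto; apply INR_le; lra).
      assert (INR (S (fi t)) <= INR (fi s))%R by (apply le_INR; lia).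
      assert (HS := S_INR (fi t)). rewrite (Rabs_right (s - t)) by lra.
      rewrite (Rabs_right (INR (fi s) - INR (S (fi t)))) by lra. lra.
  -
    assert (Hin := dist_in (path_pt Gr X u W s) (path_pt Gr X u W t)).
    set (c := Defs.dist Gr X _ _) in *. clearbody c.
    apply in_app_or in Hin. destruct Hin as [Hin|Hin].
    + apply in_end_cands in Hin. destruct Hin as [e1 [e2 [H1 [H2 Hc]]]].
      destruct (pends_char u W s e1 HW Hs H1) as [k [Hk1 [Hk2 [Hk3 [Hk4 Hk5]]]]].
      destruct (pends_char u W t e2 HW Ht H2) as [l [Hl1 [Hl2 [Hl3 [Hl4 Hl5]]]]].
      subst c. rewrite Hk3, Hl3, Hk4, Hl4, (geo_dist_R u v W k l G Hk2 Hl2).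
      rewrite (Rabs_minus_sym t). apply Rabs3.
    + apply in_edge_cands in Hin.
      destruct Hin as [g1 [a [t1 [h1 [b [u1 [Ep [Eq Hc]]]]]]]].
      destruct (pt_cases u W s Hs) as [[Hl [a' [Ea Ep']]]|[Hl [Es Ep']]]; rewrite Ep' in Ep; try discriminate.
      destruct (pt_cases u W t Ht) as [[Hl' [b' [Eb Eq']]]|[Hl' [Et Eq']]]; rewrite Eq' in Eq; try discriminate.
      injection Ep as <- <- <-. injection Eq as <- <- <-.
      destruct Hc as [[E1 [E2 E3]]|[E1 [E2 E3]]].
      * apply (geo_inj u v W) in E1; auto; try lia. subst c. rewrite E1. right. f_equal. ring.
      * exfalso. rewrite <- (pv_succ u W _ a' Ea) in E1.
        apply (geo_inj u v W) in E1; auto; try lia.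
        assert (E4 : pv u W (S (fi t)) = pv u W (fi s)).
        { rewrite (pv_succ u W _ b' Eb), E2, lval_flip.
          first [rewrite <- E1 | rewrite E1].
          rewrite (pv_succ u W _ a' Ea). rewrite <- mulA, mulVr, mul1r. reflexivity. }
        apply (geo_inj u v W) in E4; auto; lia.
Qed.

Lemma dist_nonneg p q : (forall e, In e (pends Gr X p) -> (0 <= snd e)%R) ->
  (forall e, In e (pends Gr X q) -> (0 <= snd e)%R) -> (0 <= Defs.dist Gr X p q)%R.
Proof.
  intros Hp Hq. assert (Hin := dist_in p q). set (c := Defs.dist Gr X p q) in *. clearbody c.
  apply in_app_or in Hin. destruct Hin as [Hin|Hin].
  - apply in_end_cands in Hin. destruct Hin as [e1 [e2 [H1 [H2 Hc]]]].
    assert (A := Hp e1 H1). assert (B := Hq e2 H2). assert (C := pos_INR (d (fst e1) (fst e2))). lra.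
  - apply in_edge_cands in Hin. destruct Hin as [g1 [a [t1 [h1 [b [u1 [Ep [Eq Hc]]]]]]]].
    destruct Hc as [[_ [_ E]]|[_ [_ E]]]; rewrite E; apply Rabs_pos.
Qed.

Lemma fi_0 : fi 0 = 0.
Proof. exact (fi_INR 0). Qed.

Lemma geo_is_geodesic u v W : geo u v W ->
  is_geodesic Gr X (path_pt Gr X u W) (INR (length W)) (PV Gr u) (PV Gr v).
Proof.
  intros G. assert (HW : is_word Gr X W) by apply G. assert (Hn := pos_INR (length W)).
  split; [auto|]. split; [|split; [|split]].
  - intros s Hs. destruct (fi_spec s ltac:(lra)) as [H1 H2].
    destruct (pt_cases u W s Hs) as [[Hl [a [Ea Ep]]]|[Hl [Es Ep]]]; rewrite Ep; simpl; auto.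
    split. eapply nth_word; eauto. lra.
  - apply Rle_antisym.
    + apply dist_le. apply in_or_app. left. apply in_end_cands.
      exists (pv u W (fi 0), 0 - INR (fi 0))%R, (u, 0%R). split. apply pends_has0. lra.
      split. simpl; auto. cbn [fst snd]. rewrite fi_0, pv_0, d_refl. simpl. lra.
    + apply dist_nonneg.
      * intros e He. destruct (pends_char u W 0 e HW ltac:(lra) He) as [k [_ [_ [_ [_ H]]]]]. auto.
      * simpl. intros e [He|[]]. subst e. simpl. lra.
  - destruct (pt_cases u W (INR (length W)) ltac:(lra)) as [[Hl _]|[_ [_ Ep]]].
    + rewrite fi_INR in Hl. lia.
    + rewrite Ep, pv_n. destruct G as [_ [HE _]]. rewrite HE, mulA, mulVr, mul1l.
      unfold Defs.dist. simpl. unfold vdist. fold (d v v). rewrite d_refl. simpl. lra.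
  - intros s t Hs Ht. apply (geo_path_dist u v W); auto.
Qed.

Lemma vertex_close g W h W2 i t (delta : nat) : is_word Gr X W -> is_word Gr X W2 ->
  i <= length W -> (0 <= t <= INR (length W2))%R ->
  (Defs.dist Gr X (path_pt Gr X g W (INR i)) (path_pt Gr X h W2 t) <= INR delta)%R ->
  exists l, l <= length W2 /\ d (pv g W i) (pv h W2 l) <= delta.
Proof.
  intros HW HW2 Hi Ht Hd.
  assert (Hs : (0 <= INR i <= INR (length W))%R) by (split; [apply pos_INR | apply le_INR; auto]).
  destruct (near_vertices g W h W2 (INR i) t HW HW2 Hs Ht) as [k [l [Hk1 [Hk2 [Hl1 [Hl2 Hb]]]]]].
  rewrite fi_INR in *. exists l. split; auto.
  assert (A := pv_le g W i k HW ltac:(lia)).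
  assert (B := d_tri (pv g W i) (pv g W k) (pv h W2 l)).
  assert (C : (INR (d (pv g W i) (pv h W2 l)) <= INR delta)%R).
  { eapply Rle_trans. apply le_INR, B. rewrite plus_INR.
    apply le_INR in A. rewrite minus_INR in A by lia.
    rewrite Rabs_left1 in Hb. lra. assert (INR i <= INR k)%R by (apply le_INR; lia). lra. }
  apply INR_le in C. auto.
Qed.

Variable delta : nat.
Hypothesis hyp : hyperbolic Gr X (INR delta).

Lemma dslim A B C W i : geo A B W -> i <= length W ->
  exists q, d (pv A W i) q <= delta /\ (onGeo q B C \/ onGeo q C A).
Proof.
  intros G Hi. destruct (geo_exists B C) as [W2 G2]. destruct (geo_exists C A) as [W3 G3].
  destruct (hyp (PV Gr A) (PV Gr B) (PV Gr C) _ _ _ _ _ _ I I I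
     (geo_is_geodesic A B W G) (geo_is_geodesic B C W2 G2) (geo_is_geodesic C A W3 G3)) as [H1 _].
  assert (Hs : (0 <= INR i <= INR (length W))%R) by (split; [apply pos_INR | apply le_INR; auto]).
  destruct (H1 (INR i) Hs) as [[t [Ht Hd]]|[t [Ht Hd]]].
  - destruct (vertex_close A W B W2 i t delta ltac:(apply G) ltac:(apply G2) Hi Ht Hd) as [l [Hl Hd']].
    exists (pv B W2 l). split; auto. left. apply (geo_onGeo B C W2 l G2 Hl).
  - destruct (vertex_close A W C W3 i t delta ltac:(apply G) ltac:(apply G3) Hi Ht Hd) as [l [Hl Hd']].
    exists (pv C W3 l). split; auto. right. apply (geo_onGeo C A W3 l G3 Hl).
Qed.

Lemma max_idx (P : nat -> Prop) n : P 0 -> exists i, i <= n /\ P i /\ (i = n \/ ~ P (S i)).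
Proof.
  intros P0. induction n as [|n IH].
  - exists 0. auto.
  - destruct IH as [i [Hi [Pi [E|NP]]]].
    + subst i. destruct (classic (P (S n))) as [H|H].
      * exists (S n). auto.
      * exists n. auto.
    + exists i. auto.
Qed.

Lemma near_point w x z W : geo x z W ->
  exists i, i <= length W /\
    2 * d w (pv x W i) + d x z <= d w x + d w z + 4 * delta + 2.
Proof.
  intros G.
  set (Sp := fun i => exists a, d (pv x W i) a <= delta /\ onGeo a w x).
  assert (S0 : Sp 0). { exists x. rewrite pv_0, d_refl. split. lia. unfold onGeo. rewrite d_refl. lia. }
  destruct (max_idx Sp (length W) S0) as [i [Hi [[a [Ha Ga]] Hmax]]].
  assert (Hb : exists j b, i <= j /\ j <= S i /\ j <= length W /\ d (pv x W j) b <= delta /\ onGeo b z w).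
  { destruct Hmax as [E|NS].
    - exists (length W), z. split. lia. split. lia. split. lia. split.
      + rewrite pv_n. destruct G as [_ [HE _]]. rewrite HE, mulA, mulVr, mul1l, d_refl. lia.
      + unfold onGeo. rewrite d_refl. lia.
    - assert (Hi' : S i <= length W).
      { destruct (Nat.eq_dec i (length W)) as [E|E]; [|lia].
        exfalso. apply NS.
        exists a. split; auto.
        assert (Epv : pv x W (S i) = pv x W i) by (unfold pvert; rewrite !firstn_all2 by lia; reflexivity).
        rewrite Epv. exact Ha. }
      destruct (dslim x z w W (S i) G Hi') as [q [Hq [Gq|Gq]]].
      + exists (S i), q. auto.
      + exfalso. apply NS. exists q. auto. }
  destruct Hb as [j [b [Hj1 [Hj2 [Hj3 [Hb Gb]]]]]].
  exists i. split; auto.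
  assert (O := geo_onGeo x z W i G Hi). unfold onGeo in O, Ga, Gb.
  assert (Pij := pv_le x W i j ltac:(apply G) Hj1).
  assert (T1 := d_tri x a (pv x W i)).
  assert (T2 := d_tri (pv x W i) (pv x W j) z).
  assert (T3 := d_tri (pv x W j) b z).
  assert (T4 := d_tri w a (pv x W i)).
  assert (T5 := d_tri w b (pv x W j)).
  assert (T6 := d_tri w (pv x W j) (pv x W i)).
  assert (S1 := d_sym a (pv x W i)). assert (S2 := d_sym a x). assert (S3 := d_sym z b).
  assert (S4 := d_sym b w). assert (S5 := d_sym z w). assert (S6 := d_sym (pv x W j) (pv x W i)).
  assert (S7 := d_sym b (pv x W j)).
  lia.
Qed.

Lemma fourpt w x y z :
  d w x + d w y + d x z <= d x y + d w x + d w z + (6 * delta + 2) \/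
  d w y + d w z + d x z <= d y z + d w x + d w z + (6 * delta + 2).
Proof.
  destruct (geo_exists x z) as [W G].
  destruct (near_point w x z W G) as [i [Hi Hp]].
  destruct (dslim x z y W i G Hi) as [q [Hq [Gq|Gq]]]; unfold onGeo in Gq;
  set (p := pv x W i) in *;
  assert (T0 := d_tri w p q); assert (T1 := d_tri w q x); assert (T2 := d_tri w q y);
  assert (T3 := d_tri w q z);
  assert (S1 := d_sym q x); assert (S2 := d_sym q y); assert (S3 := d_sym q z);
  assert (S4 := d_sym p q); assert (S5 := d_sym x y); assert (S6 := d_sym y z).
  - right. lia.
  - left. lia.
Qed.

Hypothesis dpos : 0 < delta.

Lemma core (x : nat -> Gr) N :
  (forall a b, a <= b -> b <= N -> b - a <= 32 * delta -> d (x a) (x b) = b - a) ->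
  N <= 2 * d (x 0) (x N) + 48 * delta.
Proof.
  intros Hl. set (m := (16 * delta)%nat). set (K := (6 * delta + 2)%nat).
  set (F := fun r => d (x 0) (x (r * m))).
  assert (Step : forall r, S r * m <= N -> F r + m <= F (S r) + K).
  { induction r as [|r IH]; intros Hr.
    - unfold F. simpl. rewrite Nat.add_0_r, d_refl. rewrite (Hl 0 m); unfold m in *; lia.
    - assert (IH' := IH ltac:(simpl in *; lia)).
      assert (E1 : d (x (r * m)) (x (S r * m)) = m) by (rewrite Hl; simpl; unfold m in *; lia).
      assert (E2 : d (x (S r * m)) (x (S (S r) * m)) = m) by (rewrite Hl; simpl; unfold m in *; lia).
      assert (E3 : d (x (r * m)) (x (S (S r) * m)) = 2 * m) by (rewrite Hl; simpl; unfold m in *; lia).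
      destruct (fourpt (x (S r * m)) (x (r * m)) (x 0) (x (S (S r) * m))) as [H|H];
      rewrite (d_sym (x (S r * m)) (x (r * m))) in H; rewrite E1, E2, E3 in H;
      rewrite (d_sym (x (S r * m)) (x 0)) in H; rewrite ?(d_sym (x (r * m)) (x 0)) in H;
      unfold F, K, m in *; lia. }
  set (c := (10 * delta - 2)%nat).
  assert (Lin : forall r, r * m <= N -> r * c <= F r).
  { induction r as [|r IH]; intros Hr. simpl; lia.
    assert (A := Step r Hr). assert (B := IH ltac:(simpl in Hr; lia)).
    rewrite Nat.mul_succ_l. unfold c, K, m in *. lia. }
  assert (Hm : 0 < m) by (unfold m; lia).
  set (r := N / m). set (rem := N mod m).
  assert (Ediv : N = m * r + rem) by (apply Nat.div_mod; lia).
  assert (Hrem : rem < m) by (apply Nat.mod_upper_bound; lia).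
  assert (L1 := Lin r ltac:(rewrite Nat.mul_comm; lia)).
  assert (L2 : r * m <= r * (2 * c)) by (apply Nat.mul_le_mono_l; unfold c, m; lia).
  assert (L3 : d (x (r * m)) (x N) = rem) by (rewrite Hl; rewrite ?(Nat.mul_comm r m); unfold m in *; lia).
  assert (T := d_tri (x 0) (x N) (x (r * m))). rewrite d_sym in L3.
  unfold F in L1. rewrite (Nat.mul_comm m r) in Ediv. unfold m in *. lia.
Qed.
End G.

Section Per.
Variable Gr : group.
Variable X : list Gr.
Local Notation "x ** y" := (gmul Gr x y) (at level 40, left associativity).
Local Notation inv := (ginv Gr).
Local Notation ev := (eval Gr X).
Local Notation pv := (pvert Gr X).
Local Notation d := (d Gr X).
Hypothesis gen : generates Gr X.

Lemma length_wpown V n : length (wpown V n) = n * length V.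
Proof. induction n as [|n IH]; simpl. auto. unfold wpown in *. simpl. rewrite length_app, IH. lia. Qed.

Lemma nth_wpown V n k dl : 0 < length V -> k < n * length V ->
  nth k (wpown V n) dl = nth (k mod length V) V dl.
Proof.
  intros HL. revert k. induction n as [|n IH]; intros k Hk. simpl in Hk; lia.
  unfold wpown. simpl. destruct (Nat.lt_ge_cases k (length V)) as [H|H].
  - rewrite app_nth1 by auto. rewrite Nat.mod_small by auto. auto.
  - rewrite app_nth2 by auto. fold (wpown V n). rewrite IH by (simpl in Hk; lia).
    f_equal. replace k with ((k - length V) + 1 * length V) at 2 by lia.
    rewrite Nat.Div0.mod_add. reflexivity.
Qed.

Definition rot (r : nat) (V : list letter) := skipn r V ++ firstn r V.

Lemma length_rot r V : r <= length V -> length (rot r V) = length V.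
Proof. intros. unfold rot. rewrite length_app, length_skipn, length_firstn. lia. Qed.

Lemma nth_rot r V k dl : r < length V -> k < length V ->
  nth k (rot r V) dl = nth ((r + k) mod length V) V dl.
Proof.
  intros Hr Hk. unfold rot. set (L := length V) in *.
  destruct (Nat.lt_ge_cases (r + k) L) as [H|H].
  - rewrite app_nth1 by (rewrite length_skipn; lia). rewrite nth_skipn.
    rewrite Nat.mod_small by auto. auto.
  - rewrite app_nth2 by (rewrite length_skipn; lia). rewrite nth_firstn, length_skipn. fold L.
    replace (k - (L - r) <? r) with true by (symmetry; apply Nat.ltb_lt; lia).
    f_equal. apply (Nat.mod_unique _ _ 1); lia.
Qed.

Lemma word_rot r V : is_word Gr X V -> is_word Gr X (rot r V).
Proof. intros. unfold rot. apply word_app; [apply word_skipn | apply word_firstn]; auto. Qed.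

Lemma ev_rot r V : ev (rot r V) = inv (ev (firstn r V)) ** (ev V ** ev (firstn r V)).
Proof.
  assert (EV : ev V = ev (firstn r V) ** ev (skipn r V)) by (rewrite <- ev_app, firstn_skipn; reflexivity).
  unfold rot. rewrite ev_app, EV. rewrite !mulA, mulVl, mul1l. reflexivity.
Qed.

Lemma rot_prefix_geo V r l : is_word Gr X V -> cyclically_minimal Gr X V ->
  r < length V -> l <= length V ->
  glen Gr X (ev (firstn l (rot r V))) = l.
Proof.
  intros HV CM Hr Hl. apply Nat.le_antisymm.
  - eapply Nat.le_trans. apply (glen_le Gr X gen). apply word_firstn, word_rot, HV. reflexivity.
    rewrite length_firstn. lia.
  - destruct (glen_word Gr X gen (ev (firstn l (rot r V)))) as [S' [HS [LS ES]]].
    set (W := S' ++ skipn l (rot r V)).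
    assert (HW : is_word Gr X W) by (apply word_app; auto; apply word_skipn, word_rot, HV).
    assert (EW : ev W = inv (ev (firstn r V)) ** (ev V ** inv (inv (ev (firstn r V))))).
    { unfold W. rewrite ev_app, ES, <- ev_app, firstn_skipn, ev_rot, inv_inv. reflexivity. }
    assert (H := CM _ W HW EW). unfold W in H. rewrite length_app, length_skipn, length_rot in H by lia.
    lia.
Qed.

Lemma periodic_geo V n g a b : is_word Gr X V -> cyclically_minimal Gr X V -> 0 < length V ->
  a <= b -> b <= n * length V -> b - a <= length V ->
  d (pv g (wpown V n) a) (pv g (wpown V n) b) = b - a.
Proof.
  intros HV CM HL Hab Hb Hl. set (U := wpown V n). set (L := length V) in *.
  rewrite (pv_split Gr X g U a b Hab). unfold Submission.d. rewrite mulA, mulVl, mul1l.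
  set (r := a mod L). assert (Hr : r < L) by (apply Nat.mod_upper_bound; lia).
  assert (E : firstn (b - a) (skipn a U) = firstn (b - a) (rot r V)).
  { apply nth_ext with (d := (0%nat, true)) (d' := (0%nat, true)).
    - rewrite !length_firstn, length_skipn, length_rot by lia. unfold U. rewrite length_wpown. lia.
    - intros k Hk. rewrite length_firstn, length_skipn in Hk. unfold U in Hk. rewrite length_wpown in Hk.
      rewrite !nth_firstn. replace (k <? b - a) with true by (symmetry; apply Nat.ltb_lt; lia).
      rewrite nth_skipn. unfold U. rewrite nth_wpown by lia. rewrite nth_rot by lia.
      f_equal. unfold r. fold L.
      rewrite (Nat.div_mod_eq a L) at 1. rewrite <- Nat.add_assoc, Nat.add_comm, Nat.mul_comm.
      rewrite Nat.Div0.mod_add. reflexivity. }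
  rewrite E. apply rot_prefix_geo; auto.
Qed.

Lemma cm_winv V : cyclically_minimal Gr X V -> cyclically_minimal Gr X (winv V).
Proof.
  intros CM g W HW E. rewrite length_winv. rewrite <- (length_winv W).
  apply (CM g). apply word_winv; auto.
  rewrite ev_winv, E, ev_winv, !inv_mul. repeat rewrite inv_inv. symmetry. apply mulA.
Qed.
End Per.

Lemma word_wpown (Gr : group) (X : list Gr) V n : is_word Gr X V -> is_word Gr X (wpown V n).
Proof. intros HV. induction n as [|n IH]. constructor. unfold wpown in *. simpl. apply word_app; auto. Qed.

Lemma main_pown (Gr : group) (X : list Gr) (delta : nat) :
  generates Gr X -> (0 < delta)%nat -> hyperbolic Gr X (INR delta) ->
  forall V n, is_word Gr X V -> cyclically_minimal Gr X V -> (180 * delta <= length V)%nat ->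
  quasi_geodesic Gr X 4 (2520 * INR delta) (wpown V n).
Proof.
  intros gen dpos hyp V n HV CM HL. unfold quasi_geodesic. intros g s t Hs Ht.
  set (U := wpown V n) in *.
  assert (HU : is_word Gr X U) by (apply word_wpown; auto).
  assert (LU : length U = (n * length V)%nat) by apply length_wpown.
  assert (Loc : forall i j, (i <= j)%nat -> (j <= length U)%nat ->
     (j - i <= 2 * d Gr X (pvert Gr X g U i) (pvert Gr X g U j) + 48 * delta)%nat).
  { intros i j Hij Hj.
    assert (C := core Gr X gen delta hyp dpos (fun a => pvert Gr X g U (i + a)) (j - i)).
    cbv beta in C. replace (i + 0)%nat with i in C by lia. replace (i + (j - i))%nat with j in C by lia.
    apply C. intros a b Hab Hb Hd.
    replace (b - a)%nat with ((i + b) - (i + a))%nat by lia.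
    apply (periodic_geo Gr X gen V n g); auto; lia. }
  destruct (fi_spec s ltac:(lra)) as [Hs1 Hs2]. destruct (fi_spec t ltac:(lra)) as [Ht1 Ht2].
  destruct (near_vertices Gr X gen g U g U s t HU HU Hs Ht) as [k [l [Hk1 [Hk2 [Hl1 [Hl2 Hb]]]]]].
  set (D := Defs.dist Gr X _ _) in *. clearbody D.
  set (i := fi s) in *. set (j := fi t) in *.
  assert (Hi : (i <= length U)%nat) by (apply INR_le; lra).
  assert (Hj : (j <= length U)%nat) by (apply INR_le; lra).
  assert (A1 : (d Gr X (pvert Gr X g U i) (pvert Gr X g U k) <= 1)%nat).
  { destruct Hk1 as [->| ->]. rewrite d_refl; auto. 
    eapply Nat.le_trans. apply pv_le; auto. lia. }
  assert (A2 : (d Gr X (pvert Gr X g U l) (pvert Gr X g U j) <= 1)%nat).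
  { rewrite d_sym by auto. destruct Hl1 as [->| ->]. rewrite d_refl; auto.
    eapply Nat.le_trans. apply pv_le; auto. lia. }
  assert (T1 := d_tri Gr X gen (pvert Gr X g U i) (pvert Gr X g U k) (pvert Gr X g U j)).
  assert (T2 := d_tri Gr X gen (pvert Gr X g U k) (pvert Gr X g U l) (pvert Gr X g U j)).
  assert (Dij : (INR (d Gr X (pvert Gr X g U i) (pvert Gr X g U j)) <= D + 3)%R).
  { assert (R1 : (d Gr X (pvert Gr X g U i) (pvert Gr X g U j) <=
                  d Gr X (pvert Gr X g U k) (pvert Gr X g U l) + 2)%nat) by lia.
    apply le_INR in R1. rewrite plus_INR in R1. simpl in R1.
    assert (0 <= Rabs (s - INR k))%R by apply Rabs_pos. lra. }
  assert (Dpos := pos_INR (d Gr X (pvert Gr X g U i) (pvert Gr X g U j))).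
  assert (Hd1 : (1 <= INR delta)%R) by (apply (le_INR 1); lia).
  assert (Bij : (Rabs (s - t) <= 2 * INR (d Gr X (pvert Gr X g U i) (pvert Gr X g U j)) + 48 * INR delta + 1)%R).
  { destruct (Nat.le_ge_cases i j) as [H|H].
    - assert (L := Loc i j H Hj). apply le_INR in L. rewrite minus_INR in L by auto.
      rewrite plus_INR, !mult_INR, (INR_IZR_INZ 2), (INR_IZR_INZ 48) in L. simpl Z.of_nat in L.
      assert (HH := le_INR _ _ H). destruct (Rcase_abs (s - t)) as [Rc|Rc]; clear - L Hs1 Hs2 Ht1 Ht2 Hd1 Dpos Rc HH; [rewrite Rabs_left by lra | rewrite Rabs_right by lra]; lra.
    - assert (L := Loc j i H Hi). rewrite d_sym in L by auto. apply le_INR in L. rewrite minus_INR in L by auto.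
      rewrite plus_INR, !mult_INR, (INR_IZR_INZ 2), (INR_IZR_INZ 48) in L. simpl Z.of_nat in L.
      assert (HH := le_INR _ _ H). destruct (Rcase_abs (s - t)) as [Rc|Rc]; clear - L Hs1 Hs2 Ht1 Ht2 Hd1 Dpos Rc HH; [rewrite Rabs_left by lra | rewrite Rabs_right by lra]; lra. }
  lra.
Qed.

Open Scope R_scope.

Theorem lemma3p7 (Gr : group) (X : list Gr) (delta : nat) :
  NoDup X -> generates Gr X -> (0 < delta)%nat ->
  hyperbolic Gr X (INR delta) ->
  forall V : list letter,
    is_word Gr X V -> cyclically_minimal Gr X V ->
    (180 * delta <= length V)%nat ->
    forall k : Z, quasi_geodesic Gr X 4 (2520 * INR delta) (wpowZ V k).
Proof.
  intros _ gen dpos hyp V HV CM HL k. unfold wpowZ. destruct (Z.leb 0 k).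
  - apply main_pown; auto.
  - apply main_pown; auto. apply word_winv; auto. apply cm_winv; auto. rewrite length_winv. auto.
Qed.
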